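(* Consider the ARQ protocol without feedback described in the context. Let $\mathcal{T}^*_{\mathcal{P}_2}$ be the optimal value and $\Psi^*_{\mathcal{P}_2}$ an optimal policy of problem $\mathcal{P}_2$: maximize the throughput $\mathcal{T}(\Psi)$ over all admissible policies $\Psi$. If $\mathcal{T}^*_{\mathcal{P}_2}<\mathcal{T}_{\rm th}$, then problem $\mathcal{P}_1$ (minimize the packet drop probability $p_{\rm drop}(\Psi)$ over admissible policies subject to $\mathcal{T}(\Psi)\ge \mathcal{T}_{\rm th}$) is infeasible. Otherwise, $\Psi^*_{\mathcal{P}_2}$ is an optimal solution of $\mathcal{P}_1$.
   Context: System model. Time is slotted, $t=1,2,\dots$. The channel power gains $|h_t|^2$ are i.i.d. across slots with CDF $F_H$. A non-energy-harvesting transmitter sends packets at fixed rate $R$ and power $p_{\rm tx}$; let $|h_{\rm th}|^2=(2^R-1)/p_{\rm tx}$, $p_c=1-F_H(|h_{\rm th}|^2)$ and $\bar p_c=1-p_c$. Each packet may be transmitted at most $K>1$ times; $k_t\in\{0,1,\dots,K-1\}$ is the transmission index (the packet is in its $(k_t+1)$th transmission in slot $t$). The receiver harvests energy $E_{H,t}$ at the start of slot $t$, with $E_{H,t}$ i.i.d. taking values in a finite set of nonnegative integer multiples of an energy quantum $E$. Its battery level evolves as $b_{t+1}=\min\{b_t-E_{c,t}+E_{H,t+1},B_{\max}\}$, $b_1=E_{H,1}$, where $E_{c,t}$ is the energy consumed in slot $t$ and $B_{\max}$ is a finite multiple of $E$. Sampling a packet costs $E_{\rm s}$, decoding costs $E_{\rm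 d}$ (both positive multiples of $E$). In slot $t$ the receiver chooses $a_{s,t}\in\{0,1\}$ (sample or not). If it samples, it consumes $E_{\rm s}$; if moreover $|h_t|^2\ge|h_{\rm th}|^2$ (probability $p_c$, independently of the past), it decodes the packet correctly and consumes an additional $E_{\rm d}$; otherwise the sample is discarded with no further energy cost. The reception state $i_t\in\{0,1\}$ equals $1$ iff the packet currently being transmitted has already been decoded correctly. The system state is $\mathbf{s}_t=(b_t,k_t,i_t)$. ARQ without feedback: no acknowledgement is ever sent, so the transmitter starts a new packet every $K$ slots ($k_{t+1}=(k_t+1)\bmod K$, and $i_{t+1}=0$ whenever $k_{t+1}=0$). Admissible actions: $a_{s,t}=1$ is allowed only if $i_t=0$ and $b_t\ge E_{\rm s}+E_{\rm d}$; otherwise $a_{s,t}=0$. A policy $\Psi$ chooses actions based on the system state. Performance metrics: let $S_t$ be the event that a packet is decoded correctly in slot $t$, $N_t$ the event that a new packet starts in slot $t$, and $D_t$ the event that a packet is dropped in slot $t$ (i.e., $k_t=K-1$ and the packet has not been decoded correctly by the end of slot $t$). Throughput: $\mathcal{T}(\Psi)=\lim_{T\to\infty}\frac1T\mathbb{E}[\sum_{t=1}^T\mathbf{1}_{S_t}]$. Packet drop probability: $p_{\rm drop}(\Psi)=\frac{\lim_{T\to\infty}\frac1T\mathbb{E}[\sum_{t=1}^T\mathbf{1}_{D_t}]}{\lim_{T\to\infty}\frac1T\mathbb{E}[\sum_{t=1}^T\mathbf{1}_{N_t}]}$, where the limits are assumed to exist. $\mathcal{T}_{\rm th}$ is a given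 throughput requirement. *)

(* Defs.v *)
From Stdlib Require Import Reals Lra Arith.
Open Scope R_scope.

(* All energies are measured in units of the energy quantum E (so they are nats).
   A system state is (b, k, i) : nat * nat * bool (battery, transmission index,
   reception state).  Slots are 0-based here: index n denotes slot t = n+1. *)

Fixpoint fsum (n : nat) (f : nat -> R) : R :=
  match n with O => 0 | S m => fsum m f + f m end.

Definition ind (c : bool) : R := if c then 1 else 0.

(* A (randomized, Markov) policy: probability of sampling (a_s = 1) in slot n+1
   when the state is (b,k,i). *)
Definition policy := nat -> nat -> nat -> bool -> R.

Definition admissible (Es Ed : nat) (Psi : policy) : Prop :=
  forall n b k i,
    0 <= Psi n b k i <= 1 /\
    ((i = true \/ (b < Es + Ed)%nat) -> Psi n b k i = 0).

(* sum over all reachable states: b <= Bmax + Hmax (covers b_1 = E_{H,1}), k < K *)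
Definition ssum (K Bmax Hmax : nat) (f : nat -> nat -> bool -> R) : R :=
  fsum (S (Bmax + Hmax)) (fun b => fsum K (fun k => f b k false + f b k true)).

(* Probability of moving to (b',k',i') when the energy left in the battery
   after slot t is brem, and the packet state at the end of slot t is (k, i). *)
Definition next_prob (K Bmax Hmax : nat) (q : nat -> R)
  (brem k : nat) (i : bool) (b' k' : nat) (i' : bool) : R :=
  ind (Nat.eqb k' ((k + 1) mod K)) *
  ind (Bool.eqb i' (if Nat.eqb k' 0 then false else i)) *
  fsum (S Hmax) (fun h => q h * ind (Nat.eqb b' (Nat.min (brem + h) Bmax))).

Definition trans (K Bmax Hmax Es Ed : nat) (q : nat -> R) (pc a : R)
  (b k : nat) (i : bool) (b' k' : nat) (i' : bool) : R :=
  a * pc * next_prob K Bmax Hmax q (b - (Es + Ed)) k true b' k' i'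
  + a * (1 - pc) * next_prob K Bmax Hmax q (b - Es) k i b' k' i'
  + (1 - a) * next_prob K Bmax Hmax q b k i b' k' i'.

(* distribution of the state in slot n+1; initially b_1 = E_{H,1}, k_1 = 0, i_1 = 0 *)
Fixpoint dist (K Bmax Hmax Es Ed : nat) (q : nat -> R) (pc : R) (Psi : policy)
  (n : nat) : nat -> nat -> bool -> R :=
  match n with
  | O => fun b k i => if andb (Nat.eqb k 0) (negb i) then q b else 0
  | S m => fun b' k' i' =>
      ssum K Bmax Hmax (fun b k i =>
        dist K Bmax Hmax Es Ed q pc Psi m b k i *
        trans K Bmax Hmax Es Ed q pc (Psi m b k i) b k i b' k' i')
  end.

(* P(S_t): packet decoded correctly in slot t = n+1 *)
Definition probS K Bmax Hmax Es Ed q pc Psi (n : nat) : R :=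
  ssum K Bmax Hmax (fun b k i =>
    dist K Bmax Hmax Es Ed q pc Psi n b k i * Psi n b k i * pc).

(* P(N_t): a new packet starts in slot t = n+1 *)
Definition probN K Bmax Hmax Es Ed q pc Psi (n : nat) : R :=
  ssum K Bmax Hmax (fun b k i =>
    dist K Bmax Hmax Es Ed q pc Psi n b k i * ind (Nat.eqb k 0)).

(* P(D_t): k_t = K-1 and the packet is not decoded by the end of slot t = n+1 *)
Definition probD K Bmax Hmax Es Ed q pc Psi (n : nat) : R :=
  ssum K Bmax Hmax (fun b k i =>
    dist K Bmax Hmax Es Ed q pc Psi n b k i * ind (Nat.eqb k (K - 1)) *
    ind (negb i) * (1 - Psi n b k i * pc)).

(* (1/T) sum_{t=1}^T f_t, indexed by T-1 *)
Definition avg (f : nat -> R) (m : nat) : R := fsum (S m) f / INR (S m).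

Definition throughput K Bmax Hmax Es Ed q pc Psi (Tv : R) : Prop :=
  Un_cv (avg (probS K Bmax Hmax Es Ed q pc Psi)) Tv.

Definition pdrop K Bmax Hmax Es Ed q pc Psi (p : R) : Prop :=
  exists Dl Nl,
    Un_cv (avg (probD K Bmax Hmax Es Ed q pc Psi)) Dl /\
    Un_cv (avg (probN K Bmax Hmax Es Ed q pc Psi)) Nl /\
    p = Dl / Nl.

(* p_c = 1 - F_H(|h_th|^2), |h_th|^2 = (2^R - 1)/p_tx *)
Definition pcorr (FH : R -> R) (Rate ptx : R) : R :=
  1 - FH ((Rpower 2 Rate - 1) / ptx).

(* Main.v *)
From Stdlib Require Import Reals Lra Lia Arith.
Require Import Defs.
Open Scope R_scope.

Lemma fsum_ext n f g : (forall j, (j < n)%nat -> f j = g j) -> fsum n f = fsum n g.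
Proof. induction n; simpl; intros H; auto. rewrite IHn by (intros; apply H; lia). rewrite H by lia. auto. Qed.

Lemma fsum_plus n f g : fsum n (fun j => f j + g j) = fsum n f + fsum n g.
Proof. induction n; simpl; [lra| rewrite IHn; lra]. Qed.

Lemma fsum_minus n f g : fsum n (fun j => f j - g j) = fsum n f - fsum n g.
Proof. induction n; simpl; [lra| rewrite IHn; lra]. Qed.

Lemma fsum_scal_l n c f : fsum n (fun j => c * f j) = c * fsum n f.
Proof. induction n; simpl; [lra| rewrite IHn; lra]. Qed.

Lemma fsum_scal_r n c f : fsum n (fun j => f j * c) = fsum n f * c.
Proof. induction n; simpl; [lra| rewrite IHn; lra]. Qed.

Lemma fsum_swap n m (f : nat -> nat -> R) :
  fsum n (fun a => fsum m (fun b => f a b)) = fsum m (fun b => fsum n (fun a => f a b)).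
Proof. induction n; simpl.
- induction m; simpl; [lra| rewrite <- IHm; lra].
- rewrite IHn. rewrite <- fsum_plus. reflexivity. Qed.

Lemma fsum_single n j f : (j < n)%nat -> (forall k, (k < n)%nat -> k <> j -> f k = 0) -> fsum n f = f j.
Proof. induction n; intros Hj H; [lia|]. simpl.
  destruct (Nat.eq_dec j n) as [->|Hne].
  - assert (fsum n f = 0). { clear IHn Hj. assert (forall k, (k<n)%nat -> f k = 0) by (intros; apply H; lia).
      clear H. induction n; simpl; auto. rewrite IHn by (intros; apply H0; lia). rewrite H0 by lia. lra. }
    lra.
  - rewrite IHn by (try lia; intros; apply H; lia). rewrite (H n) by lia. lra. Qed.

Lemma fsum_nonneg n f : (forall j, (j<n)%nat -> 0 <= f j) -> 0 <= fsum n f.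
Proof. induction n; simpl; intros; [lra|]. assert (0 <= f n) by (apply H; lia).
  assert (0 <= fsum n f) by (apply IHn; intros; apply H; lia). lra. Qed.

Lemma cv_close (u v : nat -> R) (C l : R) :
  (forall n, Rabs (u n - v n) <= C / INR (S n)) -> Un_cv v l -> Un_cv u l.
Proof.
  intros Hc Hv eps He.
  destruct (Hv (eps/2)) as [N1 HN1]; [lra|].
  assert (HC : 0 <= C). { specialize (Hc O). simpl in Hc. assert (0 <= Rabs (u O - v O)) by apply Rabs_pos. lra. }
  destruct (INR_archimed (eps/2) C) as [N2 HN2]; [lra|].
  exists (max N1 N2). intros n Hn. unfold Rdist in *.
  specialize (HN1 n ltac:(lia)). specialize (Hc n).
  assert (C / INR (S n) < eps/2).
  { assert (HS : 0 < INR (S n)) by (apply lt_0_INR; lia).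
    assert (INR N2 <= INR (S n)) by (apply le_INR; lia).
    apply (Rmult_lt_reg_r (INR (S n))); auto. unfold Rdiv. rewrite Rmult_assoc, Rinv_l by lra. nra. }
  replace (u n - l) with ((u n - v n) + (v n - l)) by ring.
  eapply Rle_lt_trans; [apply Rabs_triang|]. lra. Qed.

Lemma mod_succ K n : (1 < K)%nat ->
  ((S n) mod K = if Nat.eqb (n mod K) (K-1) then 0 else S (n mod K))%nat.
Proof. intros HK. pose proof (Nat.div_mod n K ltac:(lia)). pose proof (Nat.mod_upper_bound n K ltac:(lia)).
  set (r := n mod K) in *. set (q := (n / K)%nat) in *.
  destruct (Nat.eqb_spec r (K-1)).
  - symmetry. apply (Nat.mod_unique _ _ (S q)); lia.
  - symmetry. apply (Nat.mod_unique _ _ q); lia. Qed.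

Section Seq.
Variables (K : nat) (c F : nat -> R).
Hypothesis HK : (1 < K)%nat.
Hypothesis F0 : F O = 1.
Hypothesis Frec : forall n, F (S n) = if Nat.eqb ((S n) mod K) 0 then 1 else F n - c n.
Hypothesis Hb : forall n, 0 <= c n <= F n /\ F n <= 1.

Definition Nseq n := ind (Nat.eqb (n mod K) 0).
Definition Dseq n := ind (Nat.eqb (n mod K) (K-1)) * (F n - c n).

Lemma E_inv n : fsum n (fun m => Dseq m + c m - Nseq m) = - F n + Nseq n.
Proof. induction n; simpl.
  - unfold Nseq. rewrite Nat.Div0.mod_0_l by lia. simpl. rewrite F0. unfold ind; lra.
  - rewrite IHn, Frec. unfold Nseq, Dseq. rewrite (mod_succ K n HK).
    pose proof (Nat.mod_upper_bound n K ltac:(lia)).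
    destruct (Nat.eqb_spec (n mod K) (K-1)) as [E|E]; simpl.
    + rewrite E. replace (Nat.eqb (K-1) 0) with false by (symmetry; apply Nat.eqb_neq; lia).
      unfold ind. lra.
    + unfold ind. lra. Qed.

Lemma N_count n : INR K * fsum n Nseq = INR n + INR (if Nat.eqb (n mod K) 0 then 0 else K - n mod K)%nat.
Proof. induction n.
  - simpl. rewrite Nat.Div0.mod_0_l. simpl. lra.
  - change (fsum (S n) Nseq) with (fsum n Nseq + Nseq n).
    rewrite Rmult_plus_distr_l, IHn. rewrite (mod_succ K n HK). unfold Nseq.
    pose proof (Nat.mod_upper_bound n K ltac:(lia)).
    rewrite S_INR.
    destruct (Nat.eqb_spec (n mod K) 0) as [E|E].
    + rewrite E. replace (Nat.eqb 0 (K-1)) with false by (symmetry; apply Nat.eqb_neq; lia).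
      replace (Nat.eqb 1 0) with false by reflexivity. replace (Nat.eqb 0 0) with true by reflexivity.
      rewrite minus_INR by lia. unfold ind. simpl. lra.
    + replace (Nat.eqb (n mod K) 0) with false by (symmetry; apply Nat.eqb_neq; lia).
      destruct (Nat.eqb_spec (n mod K) (K-1)) as [E2|E2].
      * replace (Nat.eqb 0 0) with true by reflexivity.
        rewrite E2, !minus_INR by lia. unfold ind. simpl. lra.
      * replace (Nat.eqb (S (n mod K)) 0) with false by reflexivity.
        rewrite !minus_INR by lia. rewrite S_INR. unfold ind. lra. Qed.

Lemma avgN_cv : Un_cv (avg Nseq) (1 / INR K).
Proof.
  assert (HKp : 0 < INR K) by (apply lt_0_INR; lia).
  apply (cv_close _ (fun _ => 1 / INR K) 1).
  - intros n. unfold avg. pose proof (N_count (S n)).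
    set (g := (if Nat.eqb (S n mod K) 0 then 0 else K - S n mod K)%nat) in *.
    assert (Hg : (g <= K)%nat) by (unfold g; destruct Nat.eqb; lia).
    apply le_INR in Hg.
    assert (HS : 0 < INR (S n)) by (apply lt_0_INR; lia).
    assert (0 <= INR g) by apply pos_INR.
    replace (fsum (S n) Nseq / INR (S n) - 1 / INR K) with (INR g / (INR K * INR (S n))).
    2:{ apply (Rmult_eq_reg_r (INR K * INR (S n))); [|nra]. field_simplify; [|lra|lra]. lra. }
    rewrite Rabs_right.
    2:{ apply Rle_ge. apply Rmult_le_pos; auto. left. apply Rinv_0_lt_compat. nra. }
    unfold Rdiv. rewrite Rinv_mult. apply (Rmult_le_reg_r (INR (S n))); auto.
    rewrite !Rmult_assoc, Rinv_l by lra. rewrite Rmult_1_r, Rmult_1_l.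
    apply (Rmult_le_reg_r (INR K)); auto. rewrite Rmult_assoc, Rinv_l by lra. lra.
  - intros e He. exists O. intros. unfold Rdist. rewrite Rminus_diag, Rabs_R0. auto. Qed.

Lemma avgD_cv Tv : Un_cv (avg c) Tv -> Un_cv (avg Dseq) (1 / INR K - Tv).
Proof.
  intros Hc. apply (cv_close _ (fun n => avg Nseq n - avg c n) 2).
  - intros n. unfold avg. pose proof (E_inv (S n)).
    rewrite fsum_minus, fsum_plus in H.
    assert (HS : 0 < INR (S n)) by (apply lt_0_INR; lia).
    replace (fsum (S n) Dseq / INR (S n) - (fsum (S n) Nseq / INR (S n) - fsum (S n) c / INR (S n)))
      with ((- F (S n) + Nseq (S n)) / INR (S n)) by (rewrite <- H; field; lra).
    unfold Rdiv. rewrite Rabs_mult, (Rabs_right (/ _)).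
    2:{ left. apply Rinv_0_lt_compat. lra. }
    apply Rmult_le_compat_r; [left; apply Rinv_0_lt_compat; lra|].
    pose proof (Hb (S n)). assert (0 <= Nseq (S n) <= 1) by (unfold Nseq, ind; destruct Nat.eqb; lra).
    unfold Rabs. destruct Rcase_abs; lra.
  - apply CV_minus; auto. apply avgN_cv. Qed.

End Seq.

Lemma fsum_zero n f : (forall j, (j<n)%nat -> f j = 0) -> fsum n f = 0.
Proof. intros H. rewrite (fsum_ext _ _ (fun _ => 0)) by auto. clear. induction n; simpl; [|rewrite IHn]; ring. Qed.

Section Model.
Variables (K Bmax Hmax Es Ed : nat) (q : nat -> R) (pc : R) (Psi : policy).
Hypothesis HK : (1 < K)%nat.
Hypothesis Hq0 : forall h, 0 <= q h.
Hypothesis Hqz : forall h, (Hmax < h)%nat -> q h = 0.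
Hypothesis Hq1 : fsum (S Hmax) q = 1.
Hypothesis Hpc : 0 <= pc <= 1.
Hypothesis Hadm : admissible Es Ed Psi.

Definition Sb (f : nat -> R) := fsum (S (Bmax + Hmax)) f.
Definition NP k i k' i' := ind (Nat.eqb k' ((k + 1) mod K)) *
  ind (Bool.eqb i' (if Nat.eqb k' 0 then false else i)).
Notation D := (dist K Bmax Hmax Es Ed q pc Psi).

Lemma ind_nonneg b : 0 <= ind b. Proof. unfold ind; destruct b; lra. Qed.

Lemma sum_np brem k i k' i' :
  Sb (fun b' => next_prob K Bmax Hmax q brem k i b' k' i') = NP k i k' i'.
Proof.
  unfold Sb, next_prob, NP. rewrite fsum_scal_l.
  rewrite (fsum_swap (S (Bmax+Hmax)) (S Hmax) (fun b' h => q h * ind (Nat.eqb b' (Nat.min (brem + h) Bmax)))).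
  rewrite (fsum_ext _ _ (fun h => q h)). { change (fsum (S Hmax) (fun h => q h)) with (fsum (S Hmax) q). rewrite Hq1. ring. }
  intros h Hh. rewrite fsum_scal_l.
  rewrite (fsum_single _ (Nat.min (brem + h) Bmax)).
  - rewrite Nat.eqb_refl. unfold ind. ring.
  - lia.
  - intros k0 _ Hne. apply Nat.eqb_neq in Hne. rewrite Hne. unfold ind. ring. Qed.

Lemma sum_trans a b k i k' i' :
  Sb (fun b' => trans K Bmax Hmax Es Ed q pc a b k i b' k' i') =
  a * pc * NP k true k' i' + (1 - a * pc) * NP k i k' i'.
Proof.
  unfold trans, Sb. rewrite !fsum_plus, !fsum_scal_l.
  fold (Sb (fun b' => next_prob K Bmax Hmax q (b - (Es + Ed)) k true b' k' i')).
  fold (Sb (fun b' => next_prob K Bmax Hmax q (b - Es) k i b' k' i')).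
  fold (Sb (fun b' => next_prob K Bmax Hmax q b k i b' k' i')).
  rewrite !sum_np. ring. Qed.

Lemma NP_nonneg k i k' i' : 0 <= NP k i k' i'.
Proof. unfold NP. apply Rmult_le_pos; apply ind_nonneg. Qed.

Lemma trans_nonneg a b k i b' k' i' : 0 <= a <= 1 ->
  0 <= trans K Bmax Hmax Es Ed q pc a b k i b' k' i'.
Proof.
  intros Ha. assert (forall brem k i, 0 <= next_prob K Bmax Hmax q brem k i b' k' i').
  { intros. unfold next_prob. apply Rmult_le_pos. apply Rmult_le_pos; apply ind_nonneg.
    apply fsum_nonneg. intros. apply Rmult_le_pos; auto; apply ind_nonneg. }
  unfold trans. pose proof (H (b - (Es+Ed))%nat k true). pose proof (H (b - Es)%nat k i).
  pose proof (H b k i).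
  assert (0 <= a * pc) by nra. assert (0 <= a * (1 - pc)) by nra.
  repeat apply Rplus_le_le_0_compat; apply Rmult_le_pos; lra. Qed.

Lemma dist_nonneg n b k i : 0 <= D n b k i.
Proof. revert b k i. induction n; intros; simpl.
  - destruct (andb _ _); auto; lra.
  - unfold ssum. apply fsum_nonneg. intros. apply fsum_nonneg. intros.
    apply Rplus_le_le_0_compat; apply Rmult_le_pos; auto; apply trans_nonneg; apply Hadm. Qed.

Lemma ssum_red r f : (r < K)%nat -> (forall b k i, k <> r -> f b k i = 0) ->
  ssum K Bmax Hmax f = Sb (fun b => f b r false + f b r true).
Proof. intros Hr H. unfold ssum, Sb. apply fsum_ext. intros b _.
  apply (fsum_single K r (fun k => f b k false + f b k true)); auto. intros. rewrite !H by auto. ring. Qed.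

Lemma modK_lt n : (n mod K < K)%nat. Proof. apply Nat.mod_upper_bound; lia. Qed.

Lemma dist_zero n b k i : k <> (n mod K)%nat -> D n b k i = 0.
Proof. revert b k i. induction n; intros b k i Hk; simpl.
  - rewrite Nat.Div0.mod_0_l in Hk. apply Nat.eqb_neq in Hk. rewrite Hk. reflexivity.
  - rewrite (ssum_red (n mod K)) by (auto using modK_lt; intros; rewrite IHn by auto; ring).
    unfold Sb. rewrite (fsum_ext _ _ (fun _ => 0)). { clear. induction (S (Bmax+Hmax)); simpl; [|rewrite IHn]; ring. }
    intros b0 _.
    assert (forall a i0, trans K Bmax Hmax Es Ed q pc a b0 (n mod K) i0 b k i = 0).
    { intros. unfold trans, next_prob.
      replace (Nat.eqb k ((n mod K + 1) mod K)) with false. { unfold ind. ring. }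
      symmetry. apply Nat.eqb_neq. rewrite Nat.Div0.add_mod_idemp_l. rewrite Nat.add_1_r. auto. }
    rewrite !H. ring. Qed.

Lemma distS_sum n k' i' : Sb (fun b' => D (S n) b' k' i') =
  Sb (fun b => D n b (n mod K) false *
                 (Psi n b (n mod K) false * pc * NP (n mod K) true k' i' + (1 - Psi n b (n mod K) false * pc) * NP (n mod K) false k' i')
             + D n b (n mod K) true *
                 (Psi n b (n mod K) true * pc * NP (n mod K) true k' i' + (1 - Psi n b (n mod K) true * pc) * NP (n mod K) true k' i')).
Proof.
  unfold Sb at 1. cbn [dist].
  rewrite (fsum_ext _ _ (fun b' => Sb (fun b => D n b (n mod K) false * trans K Bmax Hmax Es Ed q pc (Psi n b (n mod K) false) b (n mod K) false b' k' i'
     + D n b (n mod K) true * trans K Bmax Hmax Es Ed q pc (Psi n b (n mod K) true) b (n mod K) true b' k' i'))).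
  2:{ intros j _. apply (ssum_red (n mod K) (fun b k i => D n b k i * trans K Bmax Hmax Es Ed q pc (Psi n b k i) b k i j k' i')). apply modK_lt. intros. rewrite !dist_zero by auto. ring. }
  unfold Sb. rewrite fsum_swap. apply fsum_ext. intros b _.
  rewrite fsum_plus, !fsum_scal_l. fold (Sb (fun b' => trans K Bmax Hmax Es Ed q pc (Psi n b (n mod K) false) b (n mod K) false b' k' i')).
  fold (Sb (fun b' => trans K Bmax Hmax Es Ed q pc (Psi n b (n mod K) true) b (n mod K) true b' k' i')).
  rewrite !sum_trans. reflexivity. Qed.

End Model.

Section Model2.
Variables (K Bmax Hmax Es Ed : nat) (q : nat -> R) (pc : R) (Psi : policy).
Hypothesis HK : (1 < K)%nat.
Hypothesis Hq0 : forall h, 0 <= q h.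
Hypothesis Hqz : forall h, (Hmax < h)%nat -> q h = 0.
Hypothesis Hq1 : fsum (S Hmax) q = 1.
Hypothesis Hpc : 0 <= pc <= 1.
Hypothesis Hadm : admissible Es Ed Psi.
Notation D := (dist K Bmax Hmax Es Ed q pc Psi).
Notation Sb := (Sb Bmax Hmax).

Definition Fm n := Sb (fun b => D n b (n mod K) false).
Definition Pt n := Sb (fun b => D n b (n mod K) true).
Definition cS n := pc * Sb (fun b => D n b (n mod K) false * Psi n b (n mod K) false).

Lemma NP_eq n i i' : NP K (n mod K) i ((S n) mod K) i' =
   ind (Bool.eqb i' (if Nat.eqb ((S n) mod K) 0 then false else i)).
Proof. unfold NP. rewrite Nat.Div0.add_mod_idemp_l, Nat.add_1_r, Nat.eqb_refl. unfold ind at 1. ring. Qed.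

Lemma Psi_true n b k : Psi n b k true = 0.
Proof. apply (proj2 (Hadm n b k true)). auto. Qed.

Lemma probS_eq n : probS K Bmax Hmax Es Ed q pc Psi n = cS n.
Proof. unfold probS, cS. rewrite (ssum_red K Bmax Hmax (n mod K)).
  - unfold Sb. rewrite <- fsum_scal_l. apply fsum_ext. intros. rewrite Psi_true. ring.
  - apply modK_lt; auto.
  - intros. rewrite dist_zero by auto. ring. Qed.

Lemma probN_eq n : probN K Bmax Hmax Es Ed q pc Psi n = ind (Nat.eqb (n mod K) 0) * (Fm n + Pt n).
Proof. unfold probN, Fm, Pt. rewrite (ssum_red K Bmax Hmax (n mod K)).
  - unfold Sb. rewrite <- fsum_plus, <- fsum_scal_l. apply fsum_ext. intros. ring.
  - apply modK_lt; auto.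
  - intros. rewrite dist_zero by auto. ring. Qed.

Lemma probD_eq n : probD K Bmax Hmax Es Ed q pc Psi n = ind (Nat.eqb (n mod K) (K-1)) * (Fm n - cS n).
Proof. unfold probD, Fm, cS. rewrite (ssum_red K Bmax Hmax (n mod K)).
  - unfold Sb. rewrite <- fsum_scal_l, <- fsum_minus, <- fsum_scal_l. apply fsum_ext. intros.
    change (ind (negb false)) with 1. change (ind (negb true)) with 0. ring.
  - apply modK_lt; auto.
  - intros. rewrite dist_zero by auto. ring. Qed.

Lemma Fm_S n : Fm (S n) = if Nat.eqb ((S n) mod K) 0 then Fm n + Pt n else Fm n - cS n.
Proof. unfold Fm at 1. rewrite distS_sum by auto. rewrite !NP_eq.
  unfold Fm, Pt, cS, Sb. destruct (Nat.eqb (S n mod K) 0); cbn [Bool.eqb ind].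
  - rewrite <- fsum_plus. apply fsum_ext. intros. ring.
  - rewrite <- fsum_scal_l, <- fsum_minus. apply fsum_ext. intros. rewrite Psi_true. ring. Qed.

Lemma Pt_S n : Pt (S n) = if Nat.eqb ((S n) mod K) 0 then 0 else Pt n + cS n.
Proof. unfold Pt at 1. rewrite distS_sum by auto. rewrite !NP_eq.
  unfold Fm, Pt, cS, Sb. destruct (Nat.eqb (S n mod K) 0); cbn [Bool.eqb ind].
  - apply fsum_zero. intros. ring.
  - rewrite <- fsum_scal_l, <- fsum_plus. apply fsum_ext. intros. rewrite Psi_true. ring. Qed.

Lemma mass n : Fm n + Pt n = 1.
Proof. induction n.
  - unfold Fm, Pt, Sb. cbn [dist]. rewrite Nat.Div0.mod_0_l. cbn [Nat.eqb andb negb].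
    rewrite (fsum_zero _ (fun _ => 0)) by auto.
    assert (forall m, fsum (S (m + Hmax)) (fun b => q b) = 1).
    { intros m. induction m. { simpl plus. exact Hq1. }
      change (fsum (S (S m + Hmax)) (fun b => q b)) with (fsum (S (m + Hmax)) (fun b => q b) + q (S (m+Hmax))).
      rewrite IHm, Hqz by lia. ring. }
    rewrite H. ring.
  - rewrite Fm_S, Pt_S. destruct Nat.eqb; lra. Qed.

Lemma bounds n : 0 <= cS n <= Fm n /\ Fm n <= 1.
Proof.
  assert (0 <= Pt n) by (apply fsum_nonneg; intros; apply dist_nonneg; auto).
  pose proof (mass n).
  assert (0 <= Sb (fun b => D n b (n mod K) false * Psi n b (n mod K) false)).
  { apply fsum_nonneg. intros. apply Rmult_le_pos. apply dist_nonneg; auto. apply Hadm. }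
  assert (Fm n - cS n = Sb (fun b => D n b (n mod K) false * (1 - Psi n b (n mod K) false * pc))).
  { unfold Fm, cS, Sb. rewrite <- fsum_scal_l, <- fsum_minus. apply fsum_ext. intros. ring. }
  assert (0 <= Sb (fun b => D n b (n mod K) false * (1 - Psi n b (n mod K) false * pc))).
  { apply fsum_nonneg. intros. apply Rmult_le_pos. apply dist_nonneg; auto.
    pose proof (Hadm n j (n mod K) false). nra. }
  unfold cS. split; [split|]; try nra. fold (cS n). lra. Qed.

End Model2.

Lemma key K Bmax Hmax Es Ed q pc Psi Tv :
  (1 < K)%nat -> (forall h, 0 <= q h) -> (forall h, (Hmax < h)%nat -> q h = 0) ->
  fsum (S Hmax) q = 1 -> 0 <= pc <= 1 -> admissible Es Ed Psi ->
  throughput K Bmax Hmax Es Ed q pc Psi Tv ->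
  Un_cv (avg (probD K Bmax Hmax Es Ed q pc Psi)) (1 / INR K - Tv) /\
  Un_cv (avg (probN K Bmax Hmax Es Ed q pc Psi)) (1 / INR K).
Proof.
  intros HK Hq0 Hqz Hq1 Hpc Hadm Hth.
  set (c := cS K Bmax Hmax Es Ed q pc Psi). set (F := Fm K Bmax Hmax Es Ed q pc Psi).
  assert (F0 : F O = 1).
  { pose proof (mass K Bmax Hmax Es Ed q pc Psi HK Hqz Hq1 Hadm O).
    assert (Pt K Bmax Hmax Es Ed q pc Psi O = 0).
    { unfold Pt, Sb. apply fsum_zero. intros. cbn [dist]. rewrite Nat.Div0.mod_0_l. reflexivity. }
    unfold F. lra. }
  assert (Frec : forall n, F (S n) = if Nat.eqb ((S n) mod K) 0 then 1 else F n - c n).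
  { intros n. unfold F, c. rewrite Fm_S by auto. rewrite mass by auto. reflexivity. }
  assert (Hb : forall n, 0 <= c n <= F n /\ F n <= 1) by (intros; apply bounds; auto).
  assert (HS : forall n, probS K Bmax Hmax Es Ed q pc Psi n = c n) by (intros; apply probS_eq; auto).
  assert (HN : forall n, probN K Bmax Hmax Es Ed q pc Psi n = Nseq K n).
  { intros. rewrite probN_eq by auto. rewrite mass by auto. unfold Nseq. ring. }
  assert (HD : forall n, probD K Bmax Hmax Es Ed q pc Psi n = Dseq K c F n).
  { intros. rewrite probD_eq by auto. reflexivity. }
  assert (Eavg : forall f g, (forall n, f n = g n) -> forall m, avg f m = avg g m).
  { intros f g H m. unfold avg. rewrite (fsum_ext _ f g) by auto. reflexivity. }
  split.
  - intros e He. destruct (avgD_cv K c F HK F0 Frec Hb Tv) with e as [N HN']; auto.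
    + intros e' He'. destruct (Hth e' He') as [N HN'']. exists N. intros. rewrite <- (Eavg _ _ HS). auto.
    + exists N. intros. rewrite (Eavg _ _ HD). auto.
  - intros e He. destruct (avgN_cv K HK) with e as [N HN']; auto.
    exists N. intros. rewrite (Eavg _ _ HN). auto. Qed.

Lemma key2 K Bmax Hmax Es Ed q pc Psi Tv :
  (1 < K)%nat -> (forall h, 0 <= q h) -> (forall h, (Hmax < h)%nat -> q h = 0) ->
  fsum (S Hmax) q = 1 -> 0 <= pc <= 1 -> admissible Es Ed Psi ->
  throughput K Bmax Hmax Es Ed q pc Psi Tv ->
  pdrop K Bmax Hmax Es Ed q pc Psi (1 - INR K * Tv) /\
  (forall p, pdrop K Bmax Hmax Es Ed q pc Psi p -> p = 1 - INR K * Tv).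
Proof.
  intros. destruct (key K Bmax Hmax Es Ed q pc Psi Tv) as [HD HN]; auto.
  assert (HKp : 0 < INR K) by (apply lt_0_INR; lia).
  split.
  - exists (1 / INR K - Tv), (1 / INR K). split; auto. split; auto. field. lra.
  - intros p [Dl [Nl [G1 [G2 G3]]]].
    rewrite (UL_sequence _ _ _ G1 HD), (UL_sequence _ _ _ G2 HN) in G3. rewrite G3. field. lra. Qed.

Theorem lemma1
  (K Bmax Hmax Es Ed : nat) (q : nat -> R) (FH : R -> R) (Rate ptx : R)
  (Tth Tstar : R) (Psistar : policy) :
  (1 < K)%nat -> (0 < Es)%nat -> (0 < Ed)%nat -> 0 < ptx ->
  (forall x, 0 <= FH x <= 1) ->
  (forall h, 0 <= q h) -> (forall h, (Hmax < h)%nat -> q h = 0) ->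
  fsum (S Hmax) q = 1 ->
  (* Psistar is an optimal policy of P2 with optimal value Tstar *)
  admissible Es Ed Psistar ->
  throughput K Bmax Hmax Es Ed q (pcorr FH Rate ptx) Psistar Tstar ->
  (forall Psi Tv, admissible Es Ed Psi ->
     throughput K Bmax Hmax Es Ed q (pcorr FH Rate ptx) Psi Tv -> Tv <= Tstar) ->
  (* P1 infeasible *)
  (Tstar < Tth ->
     ~ (exists Psi Tv, admissible Es Ed Psi /\
          throughput K Bmax Hmax Es Ed q (pcorr FH Rate ptx) Psi Tv /\ Tth <= Tv)) /\
  (* otherwise Psistar solves P1 *)
  (Tth <= Tstar ->
     exists pstar,
       pdrop K Bmax Hmax Es Ed q (pcorr FH Rate ptx) Psistar pstar /\
       Tth <= Tstar /\
       (forall Psi Tv p, admissible Es Ed Psi ->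
          throughput K Bmax Hmax Es Ed q (pcorr FH Rate ptx) Psi Tv ->
          pdrop K Bmax Hmax Es Ed q (pcorr FH Rate ptx) Psi p ->
          Tth <= Tv -> pstar <= p)).
Proof.
  intros HK HEs HEd Hptx HFH Hq0 Hqz Hq1 Hadm Hth Hopt.
  assert (Hpc : 0 <= pcorr FH Rate ptx <= 1) by (unfold pcorr; pose proof (HFH ((Rpower 2 Rate - 1) / ptx)); lra).
  split.
  - intros Hlt [Psi [Tv [HA [HT HTv]]]]. pose proof (Hopt Psi Tv HA HT). lra.
  - intros Hle. exists (1 - INR K * Tstar).
    destruct (key2 K Bmax Hmax Es Ed q (pcorr FH Rate ptx) Psistar Tstar) as [Hp _]; auto.
    split; auto. split; auto.
    intros Psi Tv p HA HT HP _.
    destruct (key2 K Bmax Hmax Es Ed q (pcorr FH Rate ptx) Psi Tv) as [_ Hu]; auto.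
    rewrite (Hu p HP). pose proof (Hopt Psi Tv HA HT).
    assert (0 < INR K) by (apply lt_0_INR; lia). nra.
Qed.
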